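(* Let $X$ be a separable Banach space over $\mathbb{K}\in\{\mathbb{R},\mathbb{C}\}$ and $T\colon X\to X$ a bounded linear operator. Then $\mathrm{Prox}_k(T)$ is dense in $X^k$ for every $k\geq 2$ if and only if there exist a sequence $\{p_n\}$ in $\mathbb{N}$ and a dense subset $K$ of $X$ such that $\lim_{n\to\infty}T^{p_n}x=0$ for every $x\in K$.
   Context: For $k\geq 2$, $\mathrm{Prox}_k(T)=\{(x_1,\dots,x_k)\in X^k: \liminf_{n\to\infty}\max_{1\leq i<j\leq k}\|T^nx_i-T^nx_j\|=0\}$. *)

(* Defs.v *)
From HB Require Import structures.
From mathcomp Require Import all_boot all_order all_algebra.
From mathcomp Require Import all_classical all_reals all_analysis.
From mathcomp Require Export complex.
Import numFieldNormedType.Exports.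
Import Order.TTheory GRing.Theory Num.Theory.

Set Implicit Arguments.
Unset Strict Implicit.
Unset Printing Implicit Defensive.

Local Open Scope classical_set_scope.
Local Open Scope ring_scope.

Definition separable (X : topologicalType) : Prop :=
  exists D : set X, countable D /\ dense D.

Definition bounded_op (K : numDomainType) (X : normedModType K)
  (T : X -> X) : Prop :=
  exists M : K, forall x : X, `|T x| <= M * `|x|.

Definition prox_maxdist (K : numDomainType) (X : normedModType K)
  (k : nat) (T : X -> X) (x : 'I_k -> X) (n : nat) : K :=
  \big[Num.max/0]_(i < k) \big[Num.max/0]_(j < k | (i < j)%N)
     `|iter n T (x i) - iter n T (x j)|.

Arguments prox_maxdist {K X} k T x n.

(* Prox_k(T) = { (x_1..x_k) : liminf_n max_{i<j} |T^n x_i - T^n x_j| = 0 },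
   as a subset of X^k, here the space 'I_k -> X with the product
   (pointwise) topology. *)
Definition Prox (R : realType) (X : normedModType R) (k : nat) (T : X -> X)
  : set {ptws 'I_k -> X} :=
  [set x | limn_einf (fun n => (prox_maxdist k T x n)%:E) = 0%E].

(* Same for scalars in C = R[i]; the norm of X is R[i]-valued but real
   (nonnegative), so we take its real part ('Re). *)
Definition ProxC (R : realType) (X : normedModType R[i]) (k : nat)
  (T : X -> X) : set {ptws 'I_k -> X} :=
  [set x | limn_einf (fun n => (complex.Re (prox_maxdist k T x n))%:E) = 0%E].

Arguments Prox {R X} k T.
Arguments ProxC {R X} k T.

(* Main.v *)
Require Import Defs.
From HB Require Import structures.
From mathcomp Require Import all_boot all_order all_algebra.
From mathcomp Require Import all_classical all_reals all_analysis.
From mathcomp Require Import complex.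
From mathcomp Require Import ring.
Import numFieldNormedType.Exports.
Import Order.TTheory GRing.Theory Num.Theory.
Local Open Scope classical_set_scope.
Local Open Scope ring_scope.
Section BigMax.
Variable K : numDomainType.
Lemma bigmax_ge0 (I : Type) (r : seq I) (P : pred I) (f : I -> K) :
  (forall i, P i -> 0 <= f i) -> 0 <= \big[Num.max/0]_(i <- r | P i) f i.
Proof.
move=> f0; elim/big_ind: _ => //= x y x0 y0.
by rewrite comparable_le_max ?x0 // real_comparable // ger0_real.
Qed.
Lemma le_bigmax0 (I : eqType) (r : seq I) (P : pred I) (f : I -> K) i0 :
  (forall i, P i -> 0 <= f i) -> i0 \in r -> P i0 ->
  f i0 <= \big[Num.max/0]_(i <- r | P i) f i.
Proof.
move=> f0; elim: r => [//|a r IH]; rewrite inE big_cons => /orP[/eqP <-|ir] Pi.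
  rewrite Pi comparable_le_max ?lexx // real_comparable // ger0_real //.
    exact: f0.
  exact: bigmax_ge0.
case: ifP => Pa; last exact: IH.
have h0 : 0 <= \big[Num.max/0]_(i <- r | P i) f i by exact: bigmax_ge0.
rewrite comparable_le_max ?IH ?orbT // real_comparable // ger0_real //.
exact: f0.
Qed.
End BigMax.

Section Gen.
Variable K : numFieldType.
Variable X : normedModType K.
Variable T : {linear X -> X}.

Lemma itB n x y : iter n T (x - y) = iter n T x - iter n T y.
Proof. by elim: n => //= n ->; rewrite linearB. Qed.

Lemma bound_C : bounded_op T ->
  exists C : K, 1 <= C /\ forall n x, `|iter n T x| <= C ^+ n * `|x|.
Proof.
move=> [M hM]; exists (`|M| + 1); split; first by rewrite lerDr.
have h1 x : `|T x| <= (`|M| + 1) * `|x|.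
  apply: (le_trans (hM x)).
  have : 0 <= M * `|x| by exact: le_trans (hM x).
  move=> /ger0_norm <-; rewrite normrM normr_id ler_wpM2r ?lerDl //.
elim=> [|n IH] x /=; first by rewrite expr0 mul1r.
by apply: (le_trans (h1 _)); rewrite exprS -mulrA ler_wpM2l // addr_ge0.
Qed.

Lemma md_ge0 k x n : 0 <= prox_maxdist k T x n.
Proof.
by apply: bigmax_ge0 => i _; apply: bigmax_ge0 => j _.
Qed.

Lemma md_ge k x n (i j : 'I_k) : (i < j)%N ->
  `|iter n T (x i) - iter n T (x j)| <= prox_maxdist k T x n.
Proof.
move=> ij; rewrite /prox_maxdist.
set F := fun i : 'I_k => \big[Num.max/0]_(j < k | (i < j)%N)
   `|iter n T (x i) - iter n T (x j)|.
have h := le_bigmax0 _ _ (index_enum 'I_k) (fun _ => true) F i.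
apply: le_trans (h _ (mem_index_enum _) isT); last first.
  by move=> i' _; apply: bigmax_ge0.
rewrite /F.
have h2 := le_bigmax0 _ _ (index_enum 'I_k) (fun j : 'I_k => (i < j)%N)
   (fun j => `|iter n T (x i) - iter n T (x j)|) j.
by apply: h2 => //; exact: mem_index_enum.
Qed.

Lemma md_le k x n c : 0 <= c ->
  (forall i j : 'I_k, (i < j)%N -> `|iter n T (x i) - iter n T (x j)| <= c) ->
  prox_maxdist k T x n <= c.
Proof.
move=> c0 h; apply: bigmax_le => // i _; apply: bigmax_le => // j ij.
exact: h.
Qed.

Lemma md_shift C k x m t : 1 <= C -> (forall n x, `|iter n T x| <= C ^+ n * `|x|) ->
  prox_maxdist k T x (t + m) <= C ^+ t * prox_maxdist k T x m.
Proof.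
move=> C1 hC; apply: md_le.
  by rewrite mulr_ge0 ?md_ge0 // exprn_ge0 // (le_trans ler01).
move=> i j ij; rewrite !iterD -itB; apply: (le_trans (hC _ _)).
rewrite ler_wpM2l ?exprn_ge0 ?(le_trans ler01) //; exact: md_ge.
Qed.

Definition Psmall k (x : 'I_k -> X) := forall e : K, 0 < e -> forall N : nat,
  exists2 n, (N <= n)%N & prox_maxdist k T x n < e.

End Gen.
Arguments Psmall {K X} T {k} x.
Section Box.
Variable K : numFieldType.
Variable X : normedModType K.
Hypothesis arch : forall e : K, 0 < e -> exists n : nat, n.+1%:R^-1 < e.

Definition box {k} (a : 'I_k -> X) (d : K) : set {ptws 'I_k -> X} :=
  [set x | forall i, `|a i - x i| < d].

Lemma box_open {k} (a : 'I_k -> X) d : open (box a d).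
Proof.
rewrite openE => x xb.
have : \forall g \near (x : {ptws 'I_k -> X}), forall i, `|a i - g i| < d.
  have FF : Filter (nbhs (x : {ptws 'I_k -> X})) by exact: nbhs_filter.
  apply: (@filter_forall _ _ (fun i (g : {ptws 'I_k -> X}) => `|a i - g i| < d) _ FF) => i.
  have : nbhs (x i) (ball (a i) d).
    by apply: open_nbhs_nbhs; split; [exact: ball_open| rewrite -ball_normE; exact: xb].
  move=> /(@proj_continuous _ (fun _ => X) i x) => h.
  have sub : proj i @^-1` ball (a i) d `<=` (fun g : {ptws 'I_k -> X} => `|a i - g i| < d).
    by move=> g; rewrite /= -ball_normE.
  exact: (filterS sub h).
by [].
Qed.


Lemma box_nbhs {k} (a : {ptws 'I_k -> X}) (O : set {ptws 'I_k -> X}) :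
  nbhs a O -> exists m : nat, box a (m.+1%:R^-1) `<=` O.
Proof.
pose F := filter_from setT (fun m : nat => box a (m.+1%:R^-1)).
have FF : Filter F.
  apply: filter_fromT_filter; first by exists 0%N.
  move=> i j; exists (maxn i j) => x xb; rewrite /box /= in xb *.
  have h1 : (maxn i j).+1%:R^-1 <= i.+1%:R^-1 :> K.
    by rewrite lef_pV2 ?posrE ?ler_nat ?ltnS ?leq_maxl.
  have h2 : (maxn i j).+1%:R^-1 <= j.+1%:R^-1 :> K.
    by rewrite lef_pV2 ?posrE ?ler_nat ?ltnS ?leq_maxr.
  by split => l; [exact: (lt_le_trans (xb l) h1)|exact: (lt_le_trans (xb l) h2)].
have Fa : F --> a.
  apply/cvg_sup => i U [V] [[W] oW <-] WfN WU.
  have : nbhs (a i) W by apply: open_nbhs_nbhs; split.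
  move=> /nbhs_ballP [e /= e0 eW].
  have [m me] := arch _ e0.
  exists m => // x xb; apply: WU; apply: eW.
  by rewrite -ball_normE /=; apply: lt_trans (xb i) me.
move=> /Fa [m _ mO]; by exists m.
Qed.

Lemma dense_boxP {k} (A : set {ptws 'I_k -> X}) :
  dense A <-> forall a d, 0 < d -> exists x, A x /\ box a d x.
Proof.
split.
  move=> dA a d d0.
  have ne : box a d !=set0 by exists a => i; rewrite subrr normr0.
  have [x [Bx Ax]] := dA (box a d) ne (box_open a d).
  by exists x.
move=> h O [a Oa] oO.
have [m mO] := box_nbhs _ _ (open_nbhs_nbhs (conj oO Oa)).
have [x [Ax Bx]] := h a (m.+1%:R^-1) ltac:(by rewrite invr_gt0).
by exists x; split => //; apply: mO.
Qed.

End Box.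
Arguments box {K X k} a d.
Lemma einf0P (R : realType) (v : nat -> R) : (forall n, 0 <= v n) ->
  limn_einf (fun n => (v n)%:E) = 0%E <->
  (forall e, 0 < e -> forall N, exists2 n, (N <= n)%N & v n < e).
Proof.
move=> v0; rewrite limn_einf_lim.
rewrite (cvg_lim _ (@cvg_einfs_sup R (fun n => (v n)%:E))) //.
have lb N : (0 <= einfs (fun n => (v n)%:E) N)%E.
  apply: le_ereal_inf_tmp => _ [n _ <-]; by rewrite lee_fin.
split.
- move=> h e e0 N; apply: contrapT => hn.
  have : (e%:E <= einfs (fun n => (v n)%:E) N)%E.
    apply: le_ereal_inf_tmp => _ [n /= Nn <-]; rewrite lee_fin leNgt; apply/negP => ve.
    by apply: hn; exists n.
  have : (einfs (fun n => (v n)%:E) N <= 0)%E.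
    by rewrite -h; apply: ereal_sup_ubound; exists N.
  move=> h1 h2; have := le_trans h2 h1; by rewrite lee_fin leNgt e0.
- move=> h; apply/eqP; rewrite eq_le; apply/andP; split; last first.
    apply: le_trans (lb 0%N) _; apply: ereal_sup_ubound; by exists 0%N.
  apply: ge_ereal_sup => _ [N _ <-].
  apply/lee_addgt0Pr => e e0; rewrite add0e.
  have [n Nn ve] := h e e0 N.
  apply: le_trans (ereal_inf_lbound _) _; first by exists n.
  by rewrite lee_fin ltW.
Qed.
Section KS.
Variable K : numFieldType.
Variable X : normedModType K.
Variable T : {linear X -> X}.

Lemma key_step :
  (forall k, (2 <= k)%N -> forall (a : 'I_k -> X) (d : K), 0 < d ->
     exists x, Psmall T x /\ box a d x) ->
  forall (M : nat) (a : nat -> X) (d e : K), 0 < d -> 0 < e ->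
  exists (y : nat -> X) (n : nat), (forall j, `|y j - a j| < d) /\
    (forall j, (M <= j)%N -> y j = a j) /\
    (forall j, (j < M)%N -> `|iter n T (y j)| < e).
Proof.
move=> hP M a d e d0 e0.
pose a' := fun i : 'I_M.+2 => if (i < M)%N then a i else 0.
have [x [Px Bx]] := hP M.+2 isT a' (d / 2) ltac:(by rewrite divr_gt0).
have [n _ hn] := Px e e0 0%N.
pose z := x ord_max.
have hz : `|z| < d / 2.
  have := Bx ord_max; rewrite /a' /= ltnNge leqnSn /= sub0r normrN //.
exists (fun j => if (j < M)%N then x (inord j) - z else a j), n.
split; [|split].
- move=> j; case: ifP => jM; last by rewrite subrr normr0.
  have jM2 : (j < M.+2)%N by rewrite (leq_trans jM) // -addn2 leq_addr.
  have := Bx (inord j); rewrite /a' inordK // jM => hj.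
  have -> : x (inord j) - z - a j = (x (inord j) - a j) - z by rewrite addrAC.
  rewrite (le_lt_trans (ler_normB _ _)) // (splitr d) ltrD // distrC //.
- by move=> j; rewrite leqNgt => /negbTE ->.
- move=> j jM; rewrite jM itB.
  apply: le_lt_trans hn; apply: md_ge => /=.
  by rewrite inordK ?(ltn_trans jM) // (ltn_trans jM).
Qed.
End KS.
Lemma logn2_odd a J : logn 2 (2 ^ a * (J.*2).+1) = a.
Proof.
rewrite lognM ?expn_gt0 // pfactorK // (_ : logn 2 (J.*2).+1 = 0%N) ?addn0 //.
rewrite lognE dvdn2 /= odd_double /=. by [].
Qed.

Lemma sep_seq (K : numFieldType) (X : normedModType K) : separable X ->
  exists d : nat -> X, forall (z : X) (r : K), 0 < r -> forall J : nat,
    exists2 j, (J <= j)%N & `|z - d j| < r.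
Proof.
move=> [D [/countable_injP [f finj] dD]].
exists (fun j => xget 0 [set y | D y /\ f y = logn 2 j.+1]) => z r r0 J.
have [y [bzy Dy]] : ball z r `&` D !=set0.
  apply: dD; [by exists z; exact: ballxx | exact: ball_open].
exists (2 ^ (f y) * (J.*2).+1).-1.
  rewrite -ltnS prednK ?muln_gt0 ?expn_gt0 //.
  rewrite (leq_trans _ (leq_pmull _ _)) ?expn_gt0 // ltnS -addnn leq_addr //.
rewrite prednK ?muln_gt0 ?expn_gt0 // logn2_odd.
have [] := xgetPex 0 (ex_intro (fun y' => D y' /\ f y' = f y) y (conj Dy erefl)).
move=> Dy' /finj -> //; [by rewrite -ball_normE in bzy | by rewrite inE | by rewrite inE].
Qed.
Section NumAux.
Variable K : numFieldType.
Lemma nat_neq0 n : (n.+1%:R : K) != 0. Proof. by rewrite pnatr_eq0. Qed.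
Lemma aux1 (a b c : K) : c <= a/2 -> a/2 + (b - a) <= b - c.
Proof.
move=> h; rewrite -subr_ge0 (_ : b - c - (a/2 + (b-a)) = a/2 - c) ?subr_ge0 //.
by field.
Qed.
Lemma aux_half (e : K) : 0 < e -> e/2 + e/4 < e.
Proof.
move=> e0; rewrite -subr_gt0 (_ : e - (e/2 + e/4) = e / 4) ?divr_gt0 //.
by field.
Qed.
Lemma aux_4 (a : K) : 0 < a -> a <= 4 * a / 2.
Proof.
move=> a0; rewrite (_ : 4 * a / 2 = a + a) ?lerDl ?ltW //.
by field.
Qed.
Lemma one_le_mul n (c : K) : 1 <= c -> 1 <= n.+1%:R * c.
Proof.
move=> c1; have c0 : 0 <= c := le_trans ler01 c1.
by apply: (le_trans c1); apply: ler_peMl => //; rewrite ler1n.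
Qed.
Lemma div_le1 (x c : K) : x <= 1 -> 1 <= c -> x / c <= 1.
Proof.
move=> x1 c1; have c0 : 0 < c := lt_le_trans ltr01 c1.
by rewrite ler_pdivrMr // mul1r (le_trans x1).
Qed.
Lemma rbounds (r e c : K) : 0 < r -> r <= 1 -> 0 < e -> e <= 1 -> 1 <= c ->
  [/\ 0 < r * e / (16 * c), r * e / (16 * c) <= r / 2, r * e / (16 * c) <= e
    & c * (4 * (r * e / (16 * c))) <= e / 4].
Proof.
move=> r0 r1 e0 e1 c1; have c0 : 0 < c := lt_le_trans ltr01 c1.
have cn0 : c != 0 by rewrite gt_eqF.
split.
- by rewrite divr_gt0 ?mulr_gt0.
- rewrite (_ : r * e / (16 * c) = (r / 2) * (e / (8 * c))); last first.
    by field; rewrite ?cn0.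
  apply: ler_piMr; first by rewrite divr_ge0 ?ltW.
  by apply: div_le1 => //; exact: (one_le_mul 7).
- rewrite (_ : r * e / (16 * c) = e * (r / (16 * c))); last first.
    by field; rewrite ?cn0.
  apply: ler_piMr; first by rewrite ltW.
  by apply: div_le1 => //; exact: (one_le_mul 15).
- rewrite (_ : c * (4 * (r * e / (16 * c))) = (e / 4) * r); last first.
    by field; rewrite ?cn0.
  apply: ler_piMr => //; apply: divr_ge0; [exact: ltW | exact: ler0n].
Qed.
End NumAux.
Definition epsK (K : numFieldType) (m : nat) : K := m.+1%:R^-1.

Fixpoint stf (K : numFieldType) (X : Type) (C : K)
  (step : nat * (nat -> X) * K -> (nat -> X) * nat) (d : nat -> X) (m : nat)
  : (nat -> X) * K * nat :=
  match m with
  | 0 => (d, 1, 0%N)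
  | m'.+1 => let s := stf K X C step d m' in
             let yn := step (m', s.1.1, s.1.2) in
             (yn.1, s.1.2 * epsK K m' / (16 * C ^+ yn.2), yn.2)
  end.

Section Fwd.
Variable K : numFieldType.
Hypothesis arch : forall e : K, 0 < e -> exists n : nat, n.+1%:R^-1 < e.
Variable X : completeNormedModType K.
Variable T : {linear X -> X}.

Theorem fwd : separable X -> bounded_op T ->
  (forall k, (2 <= k)%N -> forall (a : 'I_k -> X) (d : K), 0 < d ->
     exists x, Psmall T x /\ box a d x) ->
  exists (p : nat -> nat) (S : set X),
    dense S /\ forall x, S x -> (fun n => iter (p n) T x) @ \oo --> 0.
Proof.
move=> sepX bT hP.
have [C [C1 hC]] := bound_C _ _ _ bT.
have [d hd] := sep_seq _ _ sepX.
have KS := key_step _ _ _ hP.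
have eps0 m : 0 < epsK K m by rewrite invr_gt0.
have eps1 m : epsK K m <= 1 by rewrite invf_le1 // ler1n.
have estep : forall s : nat * (nat -> X) * K, exists yn : (nat -> X) * nat,
   0 < s.2 -> [/\ (forall j, `|yn.1 j - s.1.2 j| < s.2 / 2),
     (forall j, (s.1.1.+1 <= j)%N -> yn.1 j = s.1.2 j) &
     (forall j, (j < s.1.1.+1)%N -> `|iter yn.2 T (yn.1 j)| < epsK K s.1.1 / 2)].
  move=> [[m y] r] /=; case: (pselect (0 < r)) => r0; last first.
    by exists (y, 0%N).
  have [y' [n [h1 [h2 h3]]]] := KS m.+1 y (r / 2) (epsK K m / 2)
    ltac:(by rewrite divr_gt0) ltac:(by rewrite divr_gt0).
  by exists (y', n).
case: (choice estep) => step hstep.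
pose st := stf K X C step d.
pose Y m := (st m).1.1. pose Rr m := (st m).1.2. pose Nn m := (st m).2.
have stS m : st m.+1 = ((step (m, Y m, Rr m)).1,
   Rr m * epsK K m / (16 * C ^+ (step (m, Y m, Rr m)).2), (step (m, Y m, Rr m)).2).
  by [].
have RB : forall m, 0 < Rr m /\ Rr m <= 1.
  elim => [|m [IH1 IH2]]; first by rewrite /Rr /= ltr01 lexx.
  have [h1 h2 h3 h4] := rbounds _ _ _ (C ^+ (step (m, Y m, Rr m)).2)
     IH1 IH2 (eps0 m) (eps1 m) (exprn_ege1 _ C1).
  rewrite /Rr stS /=; split => //; exact: le_trans h3 (eps1 m).
have Rpos m : 0 < Rr m by case: (RB m).
have Rle1 m : Rr m <= 1 by case: (RB m).
have RBs m := rbounds _ _ _ (C ^+ (step (m, Y m, Rr m)).2)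
     (Rpos m) (Rle1 m) (eps0 m) (eps1 m) (exprn_ege1 _ C1).
have RS m : Rr m.+1 <= Rr m / 2 by have [] := RBs m.
have Reps m : Rr m.+1 <= epsK K m by have [] := RBs m.
have Rc m : C ^+ (Nn m.+1) * (4 * Rr m.+1) <= epsK K m / 4 by have [] := RBs m.
have YS m j : `|Y m.+1 j - Y m j| < Rr m / 2.
  by have [h _ _] := hstep (m, Y m, Rr m) (Rpos m); exact: h.
have Yfix m j : (m.+1 <= j)%N -> Y m.+1 j = Y m j.
  by have [_ h _] := hstep (m, Y m, Rr m) (Rpos m); exact: h.
have Ysmall m j : (j < m.+1)%N -> `|iter (Nn m.+1) T (Y m.+1 j)| < epsK K m / 2.
  by have [_ _ h] := hstep (m, Y m, Rr m) (Rpos m); exact: h.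
have D1 s u j : `|Y (u + s)%N j - Y s j| <= Rr s - Rr (u + s)%N.
  elim: u => [|u IH]; first by rewrite add0n subrr normr0 subrr.
  rewrite addSn (_ : Y (u + s).+1 j - Y s j =
     (Y (u + s).+1 j - Y (u + s)%N j) + (Y (u + s)%N j - Y s j)); last first.
    by rewrite addrA subrK.
  apply: le_trans (ler_normD _ _) _.
  apply: le_trans (aux1 _ _ _ _ (RS (u + s)%N)).
  by apply: lerD => //; apply: ltW.
have D2 s j : (s <= j)%N -> Y s j = d j.
  elim: s => [//|s IH] sj.
  by rewrite Yfix // IH // ltnW.
have epsmono m n : (m <= n)%N -> epsK K n <= epsK K m.
  by move=> mn; rewrite /epsK lef_pV2 ?posrE ?ler_nat.
have cvY j : cvg ((fun t => Y t j) @ \oo).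
  apply/cauchy_cvgP; apply: cauchy_exP => e e0.
  have [m me] := arch _ e0.
  exists (Y m.+1 j); exists m.+1 => // t /= mt.
  rewrite -ball_normE /= distrC.
  have := D1 m.+1 (t - m.+1)%N j; rewrite subnK // => h.
  apply: le_lt_trans h _.
  have h1 : Rr m.+1 - Rr t <= Rr m.+1 by rewrite lerBlDr lerDl ltW.
  exact: le_lt_trans h1 (le_lt_trans (Reps m) me).
pose x j := lim ((fun t => Y t j) @ \oo).
have Yx j : (fun t => Y t j) @ \oo --> x j by exact: cvY j.
have D3 s j : `|Y s j - x j| < 4 * Rr s.
  have : closed_ball (Y s j) (4 * Rr s / 2) (x j).
    have := @closed_cvg _ _ _ _ (fun t => Y t j) (closed_ball (Y s j) (4 * Rr s / 2)) (@closed_ball_closed _ _ _ _).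
    move=> H; apply: (H _ _ _ (x j) (Yx j)).
    exists s => // t /= hst; apply: subset_closed_ball.
    rewrite -ball_normE /= distrC.
    have := D1 s (t - s)%N j; rewrite subnK // => h.
    apply: le_lt_trans h _; apply: lt_le_trans (aux_4 _ _ (Rpos s)).
    by rewrite ltrBlDr ltrDl.
  by move/(subset_closure_half (mulr_gt0 (ltr0n _ 4) (Rpos s))); rewrite -ball_normE.
have D4 m j : (j < m.+1)%N -> `|iter (Nn m.+1) T (x j)| < epsK K m.
  move=> jm; set n := Nn m.+1.
  have -> : iter n T (x j) = iter n T (Y m.+1 j) + iter n T (x j - Y m.+1 j).
    by rewrite itB addrC subrK.
  apply: le_lt_trans (ler_normD _ _) _.
  apply: lt_le_trans (ltW (aux_half _ _ (eps0 m))).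
  apply: ltr_leD; first exact: Ysmall.
  apply: le_trans (hC _ _) _; apply: le_trans (Rc m).
  apply: ler_wpM2l; first exact: exprn_ge0 (le_trans ler01 C1).
  by rewrite distrC ltW.
exists (fun n => Nn n.+1), (range x); split.
- move=> O [z Oz] oO.
  have : nbhs z O by exact: open_nbhs_nbhs.
  move=> /nbhs_ballP [r /= r0 rO].
  have [J hJ] := arch (r / 8) (divr_gt0 r0 (ltr0n _ 8)).
  have [j Jj hj] := hd z (r / 2) (divr_gt0 r0 (ltr0n _ 2)) J.+1.
  exists (x j); split; last by exists j.
  apply: rO; rewrite -ball_normE /=.
  have -> : z - x j = (z - d j) + (d j - x j) by rewrite addrA subrK.
  apply: le_lt_trans (ler_normD _ _) _.
  rewrite (splitr r); apply: ltrD => //.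
  rewrite -(D2 j j (leqnn j)); apply: lt_le_trans (D3 j j) _.
  case: j Jj {hj} => [//|j'] Jj.
  have h1 : Rr j'.+1 <= epsK K J := le_trans (Reps j') (epsmono J j' Jj).
  rewrite (_ : r / 2 = 4 * (r / 8)); last by field.
  by rewrite ler_pM2l ?ltr0n // (le_trans h1) // ltW.
- move=> _ [j _ <-]; apply/cvgrPdist_lt => e e0.
  have [m me] := arch _ e0.
  exists (maxn j m) => // n /= hn; rewrite sub0r normrN.
  apply: lt_le_trans (D4 n j _) _.
    by rewrite ltnS (leq_trans _ hn) // leq_maxl.
  apply: le_trans (epsmono m n _) (ltW me).
  by rewrite (leq_trans _ hn) // leq_maxr.
Qed.
End Fwd.
Section Bwd.
Variable K : numFieldType.
Variable X : normedModType K.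
Variable T : {linear X -> X}.

Theorem bwd : bounded_op T ->
  (exists (p : nat -> nat) (S : set X),
    dense S /\ forall x, S x -> (fun n => iter (p n) T x) @ \oo --> 0) ->
  forall k (a : 'I_k -> X) (d : K), 0 < d -> exists x, Psmall T x /\ box a d x.
Proof.
move=> bT [p [S [dS hS]]] k a d d0.
have [C [C1 hC]] := bound_C _ _ _ bT.
have C0 : 0 < C := lt_le_trans ltr01 C1.
have ex i : exists s, S s /\ `|a i - s| < d.
  have [s [bs Ss]] := dS (ball (a i) d) (ex_intro _ (a i) (ballxx _ d0)) (ball_open _ _).
  by exists s; split => //; rewrite -ball_normE in bs.
case: (choice ex) => s hs; exists s; split; last by move=> i; case: (hs i).
move=> e e0 N.
have CN0 : 0 < C ^+ N by rewrite exprn_gt0.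
pose e' := e / (4 * C ^+ N).
have e'0 : 0 < e' by rewrite divr_gt0 // mulr_gt0.
have ev : \forall n \near \oo, forall i, `|iter (p n) T (s i)| < e'.
  apply: filter_forall => i.
  have := hS (s i) (hs i).1; move/cvgrPdist_lt/(_ e' e'0).
  by apply: filterS => n; rewrite sub0r normrN.
have [n0 _ hn0] := ev.
have h := hn0 n0 (leqnn n0).
set m := p n0.
have md : prox_maxdist k T s m <= e' + e'.
  apply: md_le; first by rewrite addr_ge0 ?ltW.
  move=> i j _; apply: le_trans (ler_normB _ _) _.
  by apply: lerD; apply: ltW; apply: h.
have key : exists2 n, (N <= n)%N & prox_maxdist k T s n <= C ^+ N * (e' + e').
  case: (leqP N m) => Nm.
    exists m => //; apply: le_trans md _; apply: ler_peMl.
      by rewrite addr_ge0 ?ltW.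
    exact: exprn_ege1.
  exists N => //.
  rewrite -(subnK (ltnW Nm)).
  apply: le_trans (md_shift _ _ _ _ _ _ _ _ C1 hC) _.
  apply: le_trans (ler_wpM2l _ md) _; first by rewrite exprn_ge0 ?ltW.
  apply: ler_wpM2r; first by rewrite addr_ge0 ?ltW.
  by apply: ler_weXn2l => //; exact: leq_addr.
have [n Nn hn] := key; exists n => //.
apply: le_lt_trans hn _.
rewrite (_ : C ^+ N * (e' + e') = e / 2); last first.
  by rewrite /e'; field; rewrite gt_eqF.
by rewrite ltr_pdivrMr // ltr_pMr // ltr1n.
Qed.
End Bwd.
Lemma archR (R : realType) (e : R) : 0 < e -> exists n : nat, n.+1%:R^-1 < e.
Proof.
move=> e0; have [N _ hN] := near_infty_natSinv_lt (PosNum e0).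
by exists N; apply: hN => /=.
Qed.

Lemma archC (R : realType) (e : R[i]) : 0 < e -> exists n : nat, n.+1%:R^-1 < e.
Proof.
rewrite ltcE => /andP[/eqP hIm hRe].
have [n hn] := archR _ _ hRe; exists n.
have -> : (n.+1%:R : R[i])^-1 = ((n.+1%:R^-1 : R)%:C)%C by rewrite fmorphV rmorph_nat.
by rewrite ltcE /= hIm hn andbT.
Qed.

Lemma ProxP (R : realType) (X : normedModType R) (T : {linear X -> X}) k
  (x : 'I_k -> X) : Prox k T x <-> Psmall T x.
Proof. exact: (einf0P _ _ (md_ge0 _ _ _ _ _)). Qed.

Lemma ProxCP (R : realType) (X : normedModType R[i]) (T : {linear X -> X}) k
  (x : 'I_k -> X) : ProxC k T x <-> Psmall T x.
Proof.
have hmd n : 0 <= prox_maxdist k T x n by exact: md_ge0.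
have hIm n : complex.Im (prox_maxdist k T x n) = 0.
  by have := hmd n; rewrite lecE => /andP[/eqP -> _].
rewrite /ProxC /= einf0P; last first.
  by move=> n; have := hmd n; rewrite lecE => /andP[_].
split.
- move=> h e; rewrite ltcE => /andP[/eqP hIe hRe] N.
  have [n Nn hn] := h _ hRe N; exists n => //.
  by rewrite ltcE hIm hIe /= eqxx hn.
- move=> h e e0 N.
  have [|n Nn] := h ((e%:C)%C) _ N; first by rewrite ltcR.
  by rewrite ltcE => /andP[_ hn]; exists n.
Qed.

Lemma main_gen (K : numFieldType) (arch : forall e : K, 0 < e -> exists n : nat, n.+1%:R^-1 < e)
  (X : completeNormedModType K) (T : {linear X -> X}) (P : forall k, set {ptws 'I_k -> X}) :
  (forall k x, P k x <-> Psmall T x) ->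
  separable X -> bounded_op T ->
     ((forall k : nat, (2 <= k)%N -> dense (P k)) <->
      (exists (p : nat -> nat) (S : set X),
         dense S /\ forall x, S x -> (fun n => iter (p n) T x) @ \oo --> 0)).
Proof.
move=> hPk sepX bT; split.
- move=> hd; apply: fwd => // k hk a d d0.
  have [x [Px Bx]] := (dense_boxP _ _ arch (P k)).1 (hd k hk) a d d0.
  by exists x; split => //; apply/hPk.
- move=> hex k hk; apply/(dense_boxP _ _ arch).
  move=> a d d0; have [x [Px Bx]] := bwd _ _ _ bT hex k a d d0.
  by exists x; split => //; apply/hPk.
Qed.

Theorem lemma3p3 (R : realType) :
  (* case K = R *)
  (forall (X : completeNormedModType R) (T : {linear X -> X}),
     separable X -> bounded_op T ->
     ((forall k : nat, (2 <= k)%N -> dense (Prox k T)) <->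
      (exists (p : nat -> nat) (S : set X),
         dense S /\ forall x, S x -> (fun n => iter (p n) T x) @ \oo --> 0)))
  /\
  (* case K = C *)
  (forall (X : completeNormedModType R[i]) (T : {linear X -> X}),
     separable X -> bounded_op T ->
     ((forall k : nat, (2 <= k)%N -> dense (ProxC k T)) <->
      (exists (p : nat -> nat) (S : set X),
         dense S /\ forall x, S x -> (fun n => iter (p n) T x) @ \oo --> 0))).
Proof.
split.
- move=> X T; apply: (main_gen _ (archR R) X T (fun k => Prox k T)).
  by move=> k x; exact: ProxP.
- move=> X T; apply: (main_gen _ (archC R) X T (fun k => ProxC k T)).
  by move=> k x; exact: ProxCP.
Qed.
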